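(* Let $(u,x)$ be an enhanced state of an oriented link diagram $D$ with $q(u,x)=j$. Then $|Z_-(u,x)|=\frac{j_{\max}(D)-j}{2}-\Phi(u)$.
   Context: $D$ is an oriented link diagram with ordered crossings $c_1,\dots,c_n$, of which $n_+$ are positive and $n_-$ negative. A state is $u\in\{0,1\}^n$, $|u|=\sum u_i$, $\vec1=(1,\dots,1)$; $u\succ_i v$ means $u_i=1,v_i=0$, $u_j=v_j$ otherwise. $D(u)$ is the result of smoothing each $c_i$ by its Kauffman $u_i$-smoothing, with circle set $Z(u)$; the chord $e_i(u)$ records crossing $c_i$, and passing from $u$ to $v$ with $u\succ_i v$ is surgery along $e_i(u)$, a merging if the endpoints of $e_i(u)$ lie on two different circles. $\Phi(u)$ is the number of mergings in any chain $\vec1=u_0\succ u_1\succ\cdots\succ u_k=u$ (independent of the chain). An enhancement of $u$ is a map $x\colon Z(u)\to\{+1,-1\}$; $Z_\pm(u,x)$ are the circles labelled $\pm1$. The quantum grading is $q(u,x)=n_+-2n_-+|u|+|Z_+(u,x)|-|Z_-(u,x)|$, and $j_{\max}(D)$ is the maximum of $q(u,x)$ over all enhanced states. *)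

(* Defs.v *)
(* Combinatorial model of an oriented link diagram as a
   4-valent plane map (rotation system) with over/under and orientation data,
   plus some crossingless circle components. *)
From HB Require Import structures.
From mathcomp Require Import all_boot all_order all_algebra.
Set Implicit Arguments. Unset Strict Implicit. Unset Printing Implicit Defensive.
Import Order.TTheory GRing.Theory Num.Theory.

(* Darts (half-edges) at the n crossings: (i, p) is the p-th of the four
   ends at crossing c_i, p = 0,1,2,3 listed COUNTERCLOCKWISE around c_i in
   the plane; by convention positions 0 and 2 are the ends of the OVER strand
   (positions 1 and 3 those of the under strand). *)
Definition dart (n : nat) := ('I_n * 'I_4)%type.

Definition rot4 (p : 'I_4) : 'I_4 := inord ((p + 1) %% 4).
Definition rot_dart n (d : dart n) : dart n := (d.1, rot4 d.2).
Definition pos2 (p : 'I_4) : 'I_4 := inord ((p + 2) %% 4).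

Record link_diagram := LinkDiagram {
  ncross : nat;
  nfree : nat;                               (* crossingless circle components *)
  edge : dart ncross -> dart ncross;
  orient : dart ncross -> bool;              (* true: the strand leaves the
                                                crossing through this dart *)
  edge_invol : involutive edge;
  edge_nofix : forall d, edge d != d;
  orient_edge : forall d, orient (edge d) = ~~ orient d;
  orient_straight : forall i p, orient (i, pos2 p) = ~~ orient (i, p);
  (* planarity (Euler): #faces = V + 2 * #connected components, i.e. every
     connected component of the 4-valent map has genus 0 *)
  planar : fcard (fun d => rot_dart (edge d)) predT
           = ncross + 2 * n_comp (fun d e => (e == edge d) || (e == rot_dart d)) predT
}.

Section Diagram.
Variable D : link_diagram.
Local Notation n := (ncross D).
Local Notation H := (dart n).

(* crossing signs: over strand outgoing at 0 or 2, under outgoing at 1 or 3;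
   positive iff the under direction is the over direction rotated ccw by 90
   degrees, i.e. iff orient (i,0) == orient (i,1). *)
Definition positive_crossing (i : 'I_n) : bool := @orient D (i, inord 0) == @orient D (i, inord 1).
Definition npos : nat := #|[set i | positive_crossing i]|.
Definition nneg : nat := #|[set i | ~~ positive_crossing i]|.

(* states u in {0,1}^n (true = 1) *)
Definition state := {ffun 'I_n -> bool}.
Definition vec1 : state := [ffun => true].
Definition size_state (u : state) : nat := #|[set i | u i]|.

Definition succ_at (i : 'I_n) (u v : state) : bool :=
  u i && ~~ v i && [forall j, (j != i) ==> (u j == v j)].

(* Kauffman smoothings: with the over strand at positions 0,2 (ccw labels),
   the A-smoothing (= 0-smoothing) joins ends {1,2} and {3,0}; the
   B-smoothing (= 1-smoothing) joins ends {0,1} and {2,3}. *)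
Definition smooth_partner (b : bool) (p : 'I_4) : 'I_4 :=
  inord (if b then (if odd p then p.-1 else p.+1) else 3 - p).
Definition smooth (u : state) (d : H) : H := (d.1, smooth_partner (u d.1) d.2).

(* D(u): darts linked by edges and by smoothing arcs; its circles are the
   connected components, plus the nfree crossingless circles. *)
Definition adj (u : state) : rel H := fun d e => (e == @edge D d) || (e == smooth u d).
Definition circ (u : state) : finType :=
  ({d : H | roots (adj u) d} + 'I_(nfree D))%type.

(* the chord e_i(u) joins the smoothing arc through (i,0) to the one through
   (i,2); surgery along it is a merging iff these lie on different circles *)
Definition merging (u : state) (i : 'I_n) : bool :=
  ~~ connect (adj u) (i, inord 0) (i, inord 2).

(* enhancements x : Z(u) -> {+1,-1}, encoded with true = +1, false = -1 *)
Definition enhancement (u : state) := {ffun circ u -> bool}.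
Definition Zplus u (x : enhancement u) : nat := #|[pred c | x c]|.
Definition Zminus u (x : enhancement u) : nat := #|[pred c | ~~ x c]|.

Definition qgr (u : state) (x : enhancement u) : int :=
  (npos%:Z - 2 * nneg%:Z + (size_state u)%:Z + (Zplus x)%:Z - (Zminus x)%:Z)%R.

Definition enh_state := {u : state & enhancement u}.

(* maximum of q over all (finitely many, nonempty) enhanced states; the
   starting value is q of the enhanced state (vec1, all +1), which is itself
   one of the values maximized over. *)
Definition jmax : int :=
  \big[Num.max/qgr (u:=vec1) [ffun => true]]_(s : enh_state)
    qgr (tagged s).

(* a chain vec1 = u_0 > u_1 > ... > u_k = u, given as vec1 :: us *)
Definition is_chain (us : seq state) (u : state) : bool :=
  path (fun a b => [exists i, succ_at i a b]) vec1 us && (last vec1 us == u).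

Definition chain_mergings (us : seq state) : nat :=
  count (fun p : state * state => [exists i, succ_at i p.1 p.2 && merging p.1 i])
        (zip (vec1 :: us) us).

End Diagram.

(* Main.v *)
Require Import Defs.
From mathcomp Require Import all_boot all_order all_algebra all_fingroup.
From mathcomp Require Import zify.
Import Order.TTheory GRing.Theory Num.Theory.
Set Implicit Arguments. Unset Strict Implicit. Unset Printing Implicit Defensive.

Lemma ctrans (T : finType) (e : rel T) x y z :
  connect e x y -> connect e y z -> connect e x z.
Proof. exact: connect_trans. Qed.

Lemma connect_sym_of (T : finType) (e : rel T) :
  (forall x y, e x y -> connect e y x) -> connect_sym e.
Proof.
move=> H.
suff K: forall x y, connect e x y -> connect e y x.
  by move=> x y; apply/idP/idP; apply: K.
move=> x y /connectP [p]; elim: p x => [|z p IH] x /=; first by move=> _ ->.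
case/andP=> exz pz ly; exact: connect_trans (IH z pz ly) (H _ _ exz).
Qed.

Lemma connect_pred (T : finType) (e : rel T) (P : pred T) x y :
  (forall a b, e a b -> P a -> P b) -> P x -> connect e x y -> P y.
Proof.
move=> H Px /connectP [p]; elim: p x Px => [|z p IH] x Px /=; first by move=> _ ->.
case/andP=> exz pz; exact: IH (H _ _ exz Px) pz.
Qed.

Lemma fconnect_porbit (T : finType) (s : {perm T}) x y :
  fconnect s x y = (y \in porbit s x).
Proof.
apply/idP/porbitP => [/iter_findex <-| [i ->]].
  by exists (findex s x y); rewrite permX.
by rewrite permX fconnect_iter.
Qed.

Lemma ncomp_card (T : finType) (e : rel T) :
  n_comp e (predT : pred T) = #|[set x | roots e x]|.
Proof. by apply: eq_card => x; rewrite !inE andbT. Qed.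

Lemma fcard_porbits (T : finType) (s : {perm T}) : fcard s (predT : pred T) = #|porbits s|.
Proof.
have sym : connect_sym (frel s) by move=> x y; exact: (fconnect_sym (@perm_inj _ s)).
rewrite ncomp_card /porbits.
have -> : porbit s @: T = porbit s @: [set x | roots (frel s) x].
  apply/setP => O; apply/imsetP/imsetP => [[x _ ->]|[x _ ->]]; last by exists x.
  exists (froot s x); first by rewrite inE; exact: roots_root.
  by apply/esym/eqP; rewrite eq_porbit_mem -fconnect_porbit connect_root.
rewrite card_in_imset // => x y; rewrite !inE => /eqP rx /eqP ry /eqP.
rewrite eq_porbit_mem -fconnect_porbit => /(fingraph.rootP sym).
by rewrite rx ry => ->.
Qed.

Ltac case4 p := case: p => [[|[|[|[|?]]]] ?] //=.
Definition loc (o : option bool) (p : 'I_4) : 'I_4 :=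
  match o with None => rot4 p | Some b => smooth_partner b p end.
Lemma val_sp b (p : 'I_4) : nat_of_ord (smooth_partner b p) =
  if b then (if odd p then p.-1 else p.+1) else 3 - p.
Proof. rewrite /smooth_partner inordK //; case: b; case4 p. Qed.
Lemma val_rot4 (p : 'I_4) : nat_of_ord (rot4 p) = (p + 1) %% 4.
Proof. by rewrite /rot4 inordK // ltn_pmod. Qed.
Lemma val_loc o (p : 'I_4) : nat_of_ord (loc o p) = match o with None => (p + 1) %% 4 | Some b =>
  if b then (if odd p then p.-1 else p.+1) else 3 - p end.
Proof. by case: o => [b|]; rewrite /= ?val_sp ?val_rot4. Qed.
Lemma loc_inj o : injective (loc o).
Proof.
move=> p q /eqP; apply: contraTeq; move: p q.
suff H: forall p q : 'I_4, (p != q) ==> (loc o p != loc o q).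
  by move=> p q pq; move/implyP: (H p q); apply.
move=> p q; rewrite -!val_eqE /= !val_loc; case: o => [[]|]; case4 p; case4 q.
Qed.
Definition o0 : 'I_4 := Ordinal (isT : 0 < 4).
Definition o1 : 'I_4 := Ordinal (isT : 1 < 4).
Definition o2 : 'I_4 := Ordinal (isT : 2 < 4).
Definition o3 : 'I_4 := Ordinal (isT : 3 < 4).
Lemma inord0 : inord 0 = o0. Proof. by apply/val_inj; rewrite /= inordK. Qed.
Lemma inord2 : inord 2 = o2. Proof. by apply/val_inj; rewrite /= inordK. Qed.

Lemma near_fin b (p : 'I_4) :
  [|| p == o0, p == o2, smooth_partner b p == o0 | smooth_partner b p == o2].
Proof. rewrite -!val_eqE /= val_sp; case: b; case4 p. Qed.
Lemma rot_fin (p q : 'I_4) :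
  [|| q == p, q == rot4 p, q == rot4 (rot4 p) | q == rot4 (rot4 (rot4 p))].
Proof. rewrite -!val_eqE /= !val_rot4; case4 p; case4 q. Qed.
Lemma sp_invol b (p : 'I_4) : smooth_partner b (smooth_partner b p) = p.
Proof. apply/val_inj; rewrite /= !val_sp; case: b; case4 p. Qed.
Lemma sp_nofix b (p : 'I_4) : smooth_partner b p != p.
Proof. rewrite -val_eqE /= val_sp; case: b; case4 p. Qed.
Lemma tperm_pair (T : finType) (i : T) (a a' p : 'I_4) :
  tperm (i, a) (i, a') (i, p) = (i, tperm a a' p).
Proof.
case: (tpermP a a' p) => [->|->|na na']; rewrite ?tpermL ?tpermR //.
by rewrite tpermD // xpair_eqE eqxx /=; apply/eqP => e; [apply: na|apply: na']; rewrite e.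
Qed.
Lemma tperm_pairD (T : finType) (i j : T) (a a' p : 'I_4) : j != i ->
  tperm (i, a) (i, a') (j, p) = (j, p).
Proof. by move=> ne; rewrite tpermD // xpair_eqE eq_sym (negbTE ne). Qed.

Lemma ncomp_fiber (T : finType) (e e' : rel T) (a b : T) :
  connect_sym e -> connect_sym e' ->
  (forall x y, e' x y -> connect e x y) ->
  (forall x y, e x y -> connect e' x y \/
     ((connect e' x a || connect e' x b) && (connect e' y a || connect e' y b))) ->
  n_comp e' (predT : pred T) <= (n_comp e (predT : pred T)).+1.
Proof.
move=> se se' sub step.
pose near z := connect e' z a || connect e' z b.
have H2 x y : connect e x y -> connect e' x y || (near x && near y).
  apply: (connect_pred (P := fun y => connect e' x y || (near x && near y))); last first.
    by rewrite connect0.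
  move=> z w ezw /orP Pz; case: (step _ _ ezw) => [c'zw|/andP[nz nw]].
    case: Pz => [cxz|/andP[nx nz]]; first by rewrite (connect_trans cxz c'zw).
    apply/orP; right; apply/andP; split => //; rewrite /near.
    by rewrite se' in c'zw; case/orP: nz => c; rewrite (connect_trans c'zw c) ?orbT.
  apply/orP; right; apply/andP; split => //.
  case: Pz => [cxz|/andP[nx _]] //.
  by case/orP: nz => c; rewrite /near (connect_trans cxz c) ?orbT.
rewrite !ncomp_card.
set S' := [set x | roots e' x]; set S := [set x | roots e x].
have le1 : #|S' :\ fingraph.root e' b| <= #|S|.
  have <- : #|fingraph.root e @: (S' :\ fingraph.root e' b)| = #|S' :\ fingraph.root e' b|.
    apply: card_in_imset => x y; rewrite !inE => /andP[nxb rx] /andP[nyb ry] exy.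
    have: connect e x y by apply/(fingraph.rootP se).
    case/H2/orP => [cxy|/andP[nx ny]].
      by move/(fingraph.rootP se'): cxy; rewrite (eqP rx) (eqP ry).
    have Ha z : roots e' z -> z != fingraph.root e' b -> near z -> z = fingraph.root e' a.
      move=> rz nzb /orP [c|c]; move/(fingraph.rootP se'): c; rewrite (eqP rz) //.
      by move=> zb; rewrite zb eqxx in nzb.
    exact: etrans (Ha x rx nxb nx) (esym (Ha y ry nyb ny)).
  apply: subset_leq_card; apply/subsetP => _ /imsetP [x _ ->]; rewrite inE.
  exact: roots_root.
rewrite (cardsD1 (fingraph.root e' b) S') -add1n; apply: leq_add => //; exact: leq_b1.
Qed.

Section Diag.
Variable D : link_diagram.
Local Notation n := (ncross D).
Local Notation X := (dart n).

Lemma edge_inj : injective (@edge D).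
Proof. exact: inv_inj (@edge_invol D). Qed.
Definition alpha : {perm X} := perm edge_inj.
Lemma alphaE d : alpha d = edge d. Proof. by rewrite permE. Qed.
Lemma alphaK d : alpha (alpha d) = d. Proof. by rewrite !alphaE edge_invol. Qed.

Definition chc := {ffun 'I_n -> option bool}.
Definition rhof (c : chc) (d : X) : X := (d.1, loc (c d.1) d.2).
Lemma rhof_inj c : injective (rhof c).
Proof. by move=> [i p] [j q] [/= <-] /loc_inj ->. Qed.
Definition rho c : {perm X} := perm (@rhof_inj c).
Lemma rhoE c d : rho c d = rhof c d. Proof. by rewrite permE. Qed.
Definition fc c : {perm X} := alpha * rho c.
Lemma fcE c d : fc c d = rhof c (edge d). Proof. by rewrite permM alphaE rhoE. Qed.
Definition Rc c : rel X := fun d e => (e == edge d) || (e == rhof c d).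
Definition FF c := #|porbits (fc c)|.
Definition KK c := n_comp (Rc c) (predT : pred X).
Definition nsplit (c : chc) := #|[set i | c i != None]|.
Definition Phi c : int := ((n + nsplit c + FF c)%:Z - 2%:Z * (KK c)%:Z)%R.

Local Open Scope group_scope.
Lemma Rc_edge c d : connect (Rc c) d (edge d).
Proof. by apply: connect1; rewrite /Rc eqxx. Qed.
Lemma Rc_edge' c d : connect (Rc c) (edge d) d.
Proof. by apply: connect1; rewrite /Rc edge_invol eqxx. Qed.
Lemma Rc_rho c d : connect (Rc c) d (rhof c d).
Proof. by apply: connect1; rewrite /Rc eqxx orbT. Qed.

Lemma conn_rho c k d : connect (Rc c) d ((rho c ^+ k) d).
Proof.
elim: k => [|k IH]; first by rewrite expg0 perm1 connect0.
by rewrite expgSr permM; apply: connect_trans IH _; rewrite rhoE Rc_rho.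
Qed.

Lemma Rc_sym c : connect_sym (Rc c).
Proof.
apply: connect_sym_of => x y /orP [/eqP ->|/eqP ->]; first exact: Rc_edge'.
have := mem_porbit (rho c)^-1 1 (rho c x); rewrite expg1 permK porbitV.
by case/porbitP => k e; rewrite {2}e -rhoE conn_rho.
Qed.

Lemma porbit_conn c x y : y \in porbit (fc c) x -> connect (Rc c) x y.
Proof.
case/porbitP => k ->; elim: k => [|k IH]; first by rewrite expg0 perm1 connect0.
rewrite expgSr permM fcE; apply: connect_trans IH _.
exact: connect_trans (Rc_edge _ _) (Rc_rho _ _).
Qed.

Definition upd (c : chc) i o : chc := [ffun j => if j == i then o else c j].
Definition pa (b : bool) : 'I_4 := if b then o1 else o0.
Definition pb (b : bool) : 'I_4 := if b then o3 else o2.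

Lemma rho_split (c : chc) (i : 'I_n) b : c i = None ->
  rho (upd c i (Some b)) = tperm (i, pa b) (i, pb b) * rho c.
Proof.
move=> ci; apply/permP => [[j p]]; rewrite permM !rhoE.
case: (eqVneq j i) => [->|nij].
  rewrite tperm_pair /rhof /= ffunE eqxx ci /=; congr (_, _).
  apply/val_inj; rewrite /= val_sp val_rot4 permE /=.
  by case: b; case4 p.
by rewrite tperm_pairD // /rhof /= ffunE (negbTE nij).
Qed.

Lemma fc_split (c : chc) (i : 'I_n) b : c i = None ->
  fc (upd c i (Some b)) = tperm (alpha (i, pa b)) (alpha (i, pb b)) * fc c.
Proof.
move=> ci; rewrite /fc rho_split // !mulgA; congr (_ * _).
apply/permP => d; rewrite !permM.
case: (tpermP (alpha (i, pa b)) (alpha (i, pb b)) d) => [->|->|n1 n2];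
  rewrite ?alphaK ?tpermL ?tpermR //.
by rewrite tpermD //; apply/eqP => e; [apply: n1|apply: n2]; rewrite e alphaK.
Qed.


Lemma sp10 : smooth_partner true o1 = o0. Proof. by apply/val_inj; rewrite /= val_sp. Qed.
Lemma sp32 : smooth_partner true o3 = o2. Proof. by apply/val_inj; rewrite /= val_sp. Qed.

Lemma rot_step (c : chc) j p : c j = None -> connect (Rc c) (j, p) (j, rot4 p).
Proof. by move=> cj; have := Rc_rho c (j, p); rewrite /rhof /= cj. Qed.

Lemma rot_conn (c : chc) j p q : c j = None -> connect (Rc c) (j, p) (j, q).
Proof.
move=> cj; have s1 := rot_step p cj; have s2 := rot_step (rot4 p) cj.
have s3 := rot_step (rot4 (rot4 p)) cj.
case/or4P: (rot_fin p q) => /eqP ->.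
- exact: connect0.
- exact: s1.
- exact: connect_trans s1 s2.
- exact: connect_trans s1 (connect_trans s2 s3).
Qed.

Lemma split_near (c : chc) i b p :
  connect (Rc (upd c i (Some b))) (i, p) (i, o0) ||
  connect (Rc (upd c i (Some b))) (i, p) (i, o2).
Proof.
have st : rhof (upd c i (Some b)) (i, p) = (i, smooth_partner b p).
  by rewrite /rhof /= ffunE eqxx.
case/or4P: (near_fin b p) => /eqP e.
- by rewrite e connect0.
- by rewrite e connect0 orbT.
- by apply/orP; left; rewrite -e -st Rc_rho.
- by apply/orP; right; rewrite -e -st Rc_rho.
Qed.

Lemma split_sub (c : chc) i b : c i = None ->
  subrel (connect (Rc (upd c i (Some b)))) (connect (Rc c)).
Proof.
move=> ci; apply: connect_sub => [[j p]] y /orP [/eqP ->|/eqP ->]; first exact: Rc_edge.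
case: (eqVneq j i) => [->|nji]; first by rewrite /rhof /=; apply: rot_conn.
by rewrite /rhof /= ffunE (negbTE nji); apply: (Rc_rho c (j, p)).
Qed.

Lemma split_eq (c : chc) i b : c i = None ->
  connect (Rc (upd c i (Some b))) (i, o0) (i, o2) ->
  connect (Rc c) =2 connect (Rc (upd c i (Some b))).
Proof.
move=> ci c02.
have all_i p q : connect (Rc (upd c i (Some b))) (i, p) (i, q).
  have h r : connect (Rc (upd c i (Some b))) (i, r) (i, o0).
    case/orP: (split_near c i b r) => // h; apply: connect_trans h _; by rewrite Rc_sym.
  by apply: connect_trans (h p) _; rewrite Rc_sym.
move=> x y; apply/idP/idP; last exact: split_sub.
apply: connect_sub => [[j p]] z /orP [/eqP ->|/eqP ->]; first exact: Rc_edge.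
case: (eqVneq j i) => [->|nji]; first exact: all_i.
by have := Rc_rho (upd c i (Some b)) (j, p); rewrite /rhof /= ffunE (negbTE nji).
Qed.

Lemma nsplit_upd (c : chc) i b : c i = None ->
  nsplit (upd c i (Some b)) = (nsplit c).+1.
Proof.
move=> ci; rewrite /nsplit -add1n.
have -> : [set j | upd c i (Some b) j != None] = i |: [set j | c j != None].
  apply/setP => j; rewrite !inE ffunE.
  by case: (eqVneq j i) => [->|nji] //=.
by rewrite (cardsU1 i) inE ci eqxx.
Qed.

Lemma Phi_split (c : chc) i b : c i = None -> (Phi c <= Phi (upd c i (Some b)))%R.
Proof.
move=> ci; have ns := nsplit_upd b ci.
set x := alpha (i, pa b); set y := alpha (i, pb b).
have xy : x != y by rewrite /x /y (inj_eq perm_inj) xpair_eqE eqxx; case: (b).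
have F1 := porbits_mul_tperm (fc c) x y.
rewrite /= -fc_split // xy in F1.
have K1 : KK (upd c i (Some b)) <= (KK c).+1.
  apply: (ncomp_fiber (a := (i, o0)) (b := (i, o2))); try exact: Rc_sym.
    move=> u w h; exact: (split_sub ci (connect1 h)).
  move=> [j p] w /orP [/eqP ->|/eqP ->]; first by left; exact: Rc_edge.
  case: (eqVneq j i) => [->|nji].
    by right; apply/andP; split; apply: split_near.
  by left; have := Rc_rho (upd c i (Some b)) (j, p); rewrite /rhof /= ffunE (negbTE nji).
case: (boolP (x \in porbit (fc c) y)) => [xin|xnin] in F1 *.
  rewrite /= in F1; rewrite /Phi ns; move: F1 K1; rewrite /FF /KK.
  move: (#|porbits _|) (#|porbits _|) (n_comp _ _) (n_comp _ _) (nsplit c) => ? ? ? ? ?; lia.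
have e : tperm x y * fc (upd c i (Some b)) = fc c by rewrite fc_split // tpermKg.
have F2 := porbits_mul_tperm (fc (upd c i (Some b))) x y.
rewrite /= e xy in F2.
case: (boolP (x \in porbit (fc (upd c i (Some b))) y)) => [xin'|xnin'] in F2; last first.
  rewrite /= in F1 F2; move: F1 F2; rewrite /FF.
  move: (#|porbits _|) (#|porbits _|) => ? ?; lia.
have cyx := porbit_conn xin'.
have c02 : connect (Rc (upd c i (Some b))) (i, o0) (i, o2).
  have cba : connect (Rc (upd c i (Some b))) (i, pb b) (i, pa b).
    apply: connect_trans (connect_trans _ cyx) _.
      by rewrite /y alphaE; apply: Rc_edge.
    by rewrite /x alphaE; apply: Rc_edge'.
  case: b {ns xy F1 K1 e F2 xin' xnin cyx x y} cba => /= cba; last by rewrite Rc_sym.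
  have r1 := Rc_rho (upd c i (Some true)) (i, o1).
  have r3 := Rc_rho (upd c i (Some true)) (i, o3).
  rewrite /rhof /= ffunE eqxx /= ?sp10 ?sp32 in r1 r3.
  rewrite Rc_sym in r1; rewrite Rc_sym in cba.
  exact: ctrans r1 (ctrans cba r3).
have KK_eq : KK c = KK (upd c i (Some b)) by apply: eq_n_comp; apply: split_eq.
rewrite /= in F1 F2; rewrite /Phi ns -KK_eq; move: F1 F2; rewrite /FF.
move: (#|porbits _|) (#|porbits _|) (KK c) (nsplit c) => ? ? ? ?; lia.
Qed.

Definition cNone : chc := [ffun => None].

Lemma Phi_none : Phi cNone = Posz (2 * n).
Proof.
have P := @planar D.
have hF : FF cNone = fcard (fun d => rot_dart (edge d)) (predT : pred X).
  by rewrite /FF -fcard_porbits; apply: eq_fcard => d; rewrite fcE /rhof ffunE.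
have hK : KK cNone = n_comp (fun d e => (e == edge d) || (e == rot_dart d)) (predT : pred X).
  by apply: eq_n_comp; apply: eq_connect => d e; rewrite /Rc /rhof ffunE.
have ns : nsplit cNone = 0.
  by apply/eqP; rewrite cards_eq0; apply/eqP/setP => j; rewrite !inE ffunE.
rewrite /Phi ns hF P -hK; lia.
Qed.

Lemma Phi_ge (c : chc) : (Posz (2 * n) <= Phi c)%R.
Proof.
move: {2}(nsplit c) (leqnn (nsplit c)) => k; elim: k c => [|k IH] c hk.
  have -> : c = cNone; last by rewrite Phi_none.
  apply/ffunP => j; rewrite ffunE; apply/eqP; apply: contraTT hk => h.
  by rewrite -ltnNge /nsplit card_gt0; apply/set0Pn; exists j; rewrite inE.
case: (pickP (fun j => c j != None)) => [j cj|none]; last first.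
  have -> : c = cNone; last by rewrite Phi_none.
  by apply/ffunP => j; rewrite ffunE; apply/eqP; move/negbT: (none j); rewrite negbK.
case e: (c j) cj => [b|] // _.
have c0j : upd c j None j = None by rewrite ffunE eqxx.
have ec : c = upd (upd c j None) j (Some b).
  by apply/ffunP => l; rewrite !ffunE; case: eqP => // ->.
rewrite ec; apply: le_trans (Phi_split b c0j); apply: IH.
by move: hk; rewrite {1}ec (nsplit_upd b c0j).
Qed.

Definition cs (u : state D) : chc := [ffun j => Some (u j)].
Lemma rhof_cs u d : rhof (cs u) d = (d.1, smooth_partner (u d.1) d.2).
Proof. by rewrite /rhof ffunE. Qed.
Lemma rho_invol u d : rhof (cs u) (rhof (cs u) d) = d.
Proof. by case: d => j p; rewrite !rhof_cs /= sp_invol. Qed.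
Lemma rho_nofix u d : rhof (cs u) d != d.
Proof. by case: d => j p; rewrite rhof_cs xpair_eqE eqxx /= sp_nofix. Qed.
Lemma rhof_f c d : rhof c d = fc c (alpha d).
Proof. by rewrite fcE -alphaE alphaK. Qed.
Lemma f_alpha u d : fc (cs u) (alpha (fc (cs u) d)) = alpha d.
Proof. by rewrite -rhof_f fcE rho_invol alphaE. Qed.
Lemma alpha_f u d : alpha (fc (cs u) d) = (fc (cs u))^-1 (alpha d).
Proof. by apply: (@perm_inj _ (fc (cs u))); rewrite permKV f_alpha. Qed.
Lemma alpha_fk u k d :
  alpha ((fc (cs u) ^+ k) d) = (((fc (cs u))^-1) ^+ k) (alpha d).
Proof.
elim: k => [|k IH]; first by rewrite !expg0 !perm1.
by rewrite !expgSr (permM (fc (cs u) ^+ k)) (permM ((fc (cs u))^-1 ^+ k)) alpha_f IH.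
Qed.
Lemma porbit_step (T : finType) (s : {perm T}) x y :
  y \in porbit s x -> s y \in porbit s x.
Proof. by case/porbitP => k ->; rewrite -permM -expgSr; apply: mem_porbit. Qed.
Lemma porbit_alpha u x y : y \in porbit (fc (cs u)) x ->
  alpha y \in porbit (fc (cs u)) (alpha x).
Proof. by case/porbitP => k ->; rewrite alpha_fk -porbitV; apply: mem_porbit. Qed.

Lemma L_inv (T : finType) (s : {perm T}) x y z :
  x \notin porbit s z -> y \notin porbit s z ->
  porbit (tperm x y * s) z = porbit s z.
Proof.
move=> hx hy.
have E k : ((tperm x y * s) ^+ k) z = (s ^+ k) z.
  elim: k => [|k IH]; first by rewrite !expg0.
  rewrite !expgSr !permM IH tpermD //.
    by apply: contraNneq hx => ->; apply: mem_porbit.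
  by apply: contraNneq hy => ->; apply: mem_porbit.
by apply/setP => w; apply/porbitP/porbitP => [[k ->]|[k ->]]; exists k; rewrite E.
Qed.

Lemma H1 u d : alpha d \notin porbit (fc (cs u)) d.
Proof.
set f := fc (cs u).
apply/negP => /porbitP [k ek].
have key j m : m + j = k -> alpha ((f ^+ j) d) = (f ^+ m) d.
  by move=> e; rewrite alpha_fk ek -e expgD permM expgVn permK.
have := odd_double_half k; rewrite -addnn; set h := k./2.
case: (odd k) => /= e.
  have kk : h + h.+1 = k by move: e; lia.
  have hh := key h.+1 h kk.
  have := rho_nofix u ((f ^+ h.+1) d).
  by rewrite rhof_f hh -permM -expgSr eqxx.
have kk : h + h = k by move: e; lia.
have hh := key h h kk.
by have := @edge_nofix D ((f ^+ h) d); rewrite -alphaE hh eqxx.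
Qed.

Lemma H2 u e y : connect (Rc (cs u)) e y ->
  (y \in porbit (fc (cs u)) e) || (y \in porbit (fc (cs u)) (alpha e)).
Proof.
move=> ce; apply: (connect_pred (P := fun y =>
  (y \in porbit (fc (cs u)) e) || (y \in porbit (fc (cs u)) (alpha e))) _ _ ce);
  last by rewrite porbit_id.
move=> z w /orP [/eqP ->|/eqP ->] /orP [h|h].
- by rewrite -alphaE (porbit_alpha h) orbT.
- by rewrite -alphaE; have := porbit_alpha h; rewrite alphaK => ->.
- by rewrite rhof_f (porbit_step (porbit_alpha h)) orbT.
- by have := porbit_step (porbit_alpha h); rewrite alphaK rhof_f => ->.
Qed.

Lemma FK u : FF (cs u) = (2 * KK (cs u))%N.
Proof.
set f := fc (cs u); set c := cs u.
have sym := Rc_sym c.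
set Rt := [set x | roots (Rc c) x].
have hK : KK c = #|Rt| by rewrite /KK ncomp_card.
have rr r : r \in Rt -> fingraph.root (Rc c) r = r by rewrite inE => /eqP.
have eqr r1 r2 : r1 \in Rt -> r2 \in Rt -> connect (Rc c) r1 r2 -> r1 = r2.
  by move=> h1 h2 /(fingraph.rootP sym); rewrite !rr.
set A := porbit f @: Rt; set B := (fun r => porbit f (alpha r)) @: Rt.
have cA : #|A| = #|Rt|.
  apply: card_in_imset => r1 r2 h1 h2 e; apply: eqr => //.
  by apply: porbit_conn; rewrite -/f e porbit_id.
have cB : #|B| = #|Rt|.
  apply: card_in_imset => r1 r2 h1 h2 e; apply: eqr => //.
  have h : connect (Rc c) (alpha r1) (alpha r2).
    by apply: porbit_conn; rewrite -/f e porbit_id.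
  apply: ctrans (ctrans _ h) _; rewrite alphaE; [exact: Rc_edge | exact: Rc_edge'].
have dis : A :&: B = set0.
  apply/setP => O; rewrite !inE; apply/negP => /andP [/imsetP [r1 h1 ->] /imsetP [r2 h2 e]].
  have c12 : connect (Rc c) r1 r2.
    have h : connect (Rc c) r1 (alpha r2) by apply: porbit_conn; rewrite -/f e porbit_id.
    by apply: ctrans h _; rewrite alphaE; exact: Rc_edge'.
  move: e; rewrite (eqr _ _ h1 h2 c12) => e.
  by move: (H1 u r2); rewrite -/f e porbit_id.
have cover : porbits f = A :|: B.
  apply/eqP; rewrite eqEsubset; apply/andP; split; apply/subsetP => O.
    case/imsetP => d _ ->; set r := fingraph.root (Rc c) d.
    have hr : r \in Rt by rewrite inE; exact: roots_root.
    have crd : connect (Rc c) r d by rewrite sym; exact: connect_root.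
    rewrite inE; case/orP: (H2 crd) => h; apply/orP; [left|right]; apply/imsetP;
      exists r => //; apply/eqP; rewrite eq_porbit_mem //.
  by rewrite inE => /orP [] /imsetP [r _ ->]; rewrite imset_f.
by rewrite /FF -/f cover cardsU dis cards0 cA cB hK subn0 addnn mul2n.
Qed.


Lemma sp01 : smooth_partner true o0 = o1. Proof. by apply/val_inj; rewrite /= val_sp. Qed.
Lemma sp23 : smooth_partner true o2 = o3. Proof. by apply/val_inj; rewrite /= val_sp. Qed.

Lemma nsplit_cs u : nsplit (cs u) = n.
Proof.
rewrite /nsplit (_ : [set j | cs u j != None] = setT) ?cardsT ?card_ord //.
by apply/setP => j; rewrite !inE ffunE.
Qed.

Lemma key_step (u v : state D) i : succ_at i u v ->
  (KK (cs v) + (merging u i).*2 = (KK (cs u)).+1)%N.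
Proof.
move=> /andP [/andP [ui nvi] /forallP eqv].
set N := upd (cs u) i None.
have Ni : N i = None by rewrite ffunE eqxx.
have eu : cs u = upd N i (Some true).
  by apply/ffunP => j; rewrite !ffunE; case: eqP => [->|] //; rewrite ui.
have ev : cs v = upd N i (Some false).
  apply/ffunP => j; rewrite !ffunE; case: (eqVneq j i) => [->|nji].
    by rewrite (negbTE nvi).
  by have := eqv j; rewrite nji /= => /eqP ->.
set x0 := alpha (i, o0); set x1 := alpha (i, o1).
set x2 := alpha (i, o2); set x3 := alpha (i, o3).
have fu := fc_split true Ni; rewrite -eu /= in fu.
have fv := fc_split false Ni; rewrite -ev /= in fv.
rewrite -/x0 -/x1 -/x2 -/x3 in fu fv.
set f := fc (cs u) in fu *; set g := fc N in fu fv *; set h := fc (cs v) in fv *.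
have gE : g = tperm x1 x3 * f by rewrite fu tpermKg.
have fx k : f (alpha (i, k)) = (i, smooth_partner true k).
  by rewrite fcE -alphaE alphaK rhof_cs /= ui.
have fx0 : f x0 = (i, o1) by rewrite fx sp01.
have fx1 : f x1 = (i, o0) by rewrite fx sp10.
have fx2 : f x2 = (i, o3) by rewrite fx sp23.
have sym := Rc_sym (cs u).
have ce k : connect (Rc (cs u)) (i, k) (alpha (i, k)) by rewrite alphaE; apply: Rc_edge.
have ce' k : connect (Rc (cs u)) (alpha (i, k)) (i, k) by rewrite alphaE; apply: Rc_edge'.
have cr k : connect (Rc (cs u)) (i, k) (i, smooth_partner true k).
  by have := Rc_rho (cs u) (i, k); rewrite rhof_cs /= ui.
have c01 : connect (Rc (cs u)) (i, o0) (i, o1) by rewrite -sp01.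
have c32 : connect (Rc (cs u)) (i, o3) (i, o2) by rewrite -sp32.
have PQ d w : w \in porbit f d -> w \in porbit f (alpha d) -> False.
  move=> h1 h2; move: (H1 u d); rewrite -/f.
  have -> : porbit f d = porbit f w by apply/esym/eqP; rewrite eq_porbit_mem.
  by rewrite -porbit_sym h2.
have hm : merging u i = ~~ connect (Rc (cs u)) (i, o0) (i, o2).
  rewrite /merging inord0 inord2 (@eq_connect _ (adj u) (Rc (cs u))) //.
  by move=> d e; rewrite /adj /Rc rhof_cs.
have FKu := FK u; have FKv := FK v.
rewrite hm.
case: (boolP (connect (Rc (cs u)) (i, o0) (i, o2))) => c02 /=.
  have ax0 : alpha x0 = (i, o0) by rewrite alphaK.
  have x2PQ : (x2 \in porbit f x0) || (x2 \in porbit f (alpha x0)).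
    by apply: H2; exact: ctrans (ce' o0) (ctrans c02 (ce o2)).
  have x1Q : x1 \in porbit f (alpha x0).
    by rewrite porbit_sym ax0 -fx1; apply: porbit_step; apply: porbit_id.
  case/orP: x2PQ => x2P.
    have x3Q : x3 \in porbit f (alpha x0).
      by rewrite /x3 -fx2; apply: porbit_alpha; apply: porbit_step.
    have x13 : x1 \in porbit f x3.
      have -> : porbit f x3 = porbit f (alpha x0) by apply/eqP; rewrite eq_porbit_mem.
      exact: x1Q.
    have F1 := porbits_mul_tperm f x1 x3.
    rewrite /= -gE x13 /= in F1.
    have n1P : x1 \notin porbit f x0 by apply/negP => h1; apply: (PQ x0 x1).
    have n3P : x3 \notin porbit f x0 by apply/negP => h1; apply: (PQ x0 x3).
    have gP : porbit g x0 = porbit f x0 by rewrite gE L_inv.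
    have x02 : x0 \in porbit g x2 by rewrite porbit_sym gP.
    have F2 := porbits_mul_tperm g x0 x2.
    rewrite /= -fv x02 /= in F2.
    have x0n2 : (x0 != x2) by rewrite (inj_eq perm_inj) xpair_eqE -val_eqE /= andbF.
    rewrite x0n2 in F2; have x1n3 : (x1 != x3) by rewrite (inj_eq perm_inj) xpair_eqE -val_eqE /= andbF.
    rewrite x1n3 in F1.
    move: F1 F2 FKu FKv; rewrite /FF -/f -/g -/h.
    move: (#|porbits f|) (#|porbits g|) (#|porbits h|) (KK (cs u)) (KK (cs v)).
    move=> a b c k1 k2 A B C E; clear -A B C E; simpl in *; lia.
  (* twisted: contradiction *)
  exfalso.
  have x3P : x3 \in porbit f x0.
    by rewrite /x3 -fx2 -[x0]alphaK; apply: porbit_alpha; apply: porbit_step.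
  have x13 : x1 \notin porbit f x3.
    have -> : porbit f x3 = porbit f x0 by apply/eqP; rewrite eq_porbit_mem.
    by apply/negP => h1; apply: (PQ x0 x1).
  have F1 := porbits_mul_tperm f x1 x3.
  rewrite /= -gE x13 /= in F1.
  have x1n3 : (x1 != x3) by rewrite (inj_eq perm_inj) xpair_eqE -val_eqE /= andbF.
  rewrite x1n3 in F1.
  have KN : KK N = KK (cs u).
    apply: eq_n_comp; rewrite eu; apply: split_eq => //; by rewrite -eu.
  have PN := Phi_ge N.
  have nsN : nsplit (cs u) = (nsplit N).+1 by rewrite eu nsplit_upd.
  rewrite nsplit_cs in nsN.
  move: PN; rewrite /Phi KN; move: F1 FKu nsN; rewrite /FF -/f -/g.
  move: (#|porbits f|) (#|porbits g|) (KK (cs u)) (nsplit N).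
  move=> a b k m A B C P; clear -A B C P; simpl in *; lia.
have n13 : x1 \notin porbit f x3.
  apply/negP => h1; move/negP: c02; apply.
  have c31 := porbit_conn h1; rewrite sym in c31.
  exact: ctrans c01 (ctrans (ce o1) (ctrans c31 (ctrans (ce' o3) c32))).
have F1 := porbits_mul_tperm f x1 x3.
rewrite /= -gE n13 /= in F1.
have n1P : x1 \notin porbit f x0.
  apply/negP => h1; move: (H1 u x0); rewrite -/f alphaK -fx1.
  by rewrite porbit_step.
have n3P : x3 \notin porbit f x0.
  apply/negP => h1; move/negP: c02; apply.
  have c03 := porbit_conn h1.
  exact: ctrans (ce o0) (ctrans c03 (ctrans (ce' o3) c32)).
have gP : porbit g x0 = porbit f x0 by rewrite gE L_inv.
have n2P : x0 \notin porbit g x2.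
  rewrite porbit_sym gP; apply/negP => h1; move/negP: c02; apply.
  have c02' := porbit_conn h1.
  exact: ctrans (ce o0) (ctrans c02' (ce' o2)).
have F2 := porbits_mul_tperm g x0 x2.
rewrite /= -fv n2P /= in F2.
have x0n2 : (x0 != x2) by rewrite (inj_eq perm_inj) xpair_eqE -val_eqE /= andbF.
rewrite x0n2 in F2; have x1n3 : (x1 != x3) by rewrite (inj_eq perm_inj) xpair_eqE -val_eqE /= andbF.
rewrite x1n3 in F1.
move: F1 F2 FKu FKv; rewrite /FF -/f -/g -/h.
move: (#|porbits f|) (#|porbits g|) (#|porbits h|) (KK (cs u)) (KK (cs v)).
move=> a b c k1 k2 A B C E; clear -A B C E; simpl in *; lia.
Qed.

End Diag.

Section Final.
Variable D : link_diagram.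
Local Notation n := (ncross D).

Lemma adj_Rc (u : state D) : adj u =2 Rc (cs u).
Proof. by move=> d e; rewrite /adj /Rc rhof_cs. Qed.

Lemma card_circ (u : state D) : #|circ u| = KK (cs u) + nfree D.
Proof.
rewrite /circ card_sum card_ord card_sig /KK ncomp_card; congr (_ + _).
by apply: eq_card => d; rewrite !inE (eq_roots (adj_Rc u)).
Qed.

Lemma Zpm (u : state D) (x : enhancement u) : Zplus x + Zminus x = #|circ u|.
Proof. by rewrite /Zplus /Zminus -(cardC [pred c | x c]); congr (_ + _); apply: eq_card. Qed.

Lemma size_succ (u v : state D) i : succ_at i u v -> size_state u = (size_state v).+1.
Proof.
move=> /andP [/andP [ui nvi] /forallP eqv]; rewrite /size_state.
have -> : [set j | u j] = i |: [set j | v j].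
  apply/setP => j; rewrite !inE; case: (eqVneq j i) => [->|nji]; first by rewrite ui.
  by have := eqv j; rewrite nji /= => /eqP ->.
by rewrite (cardsU1 i) inE (negbTE nvi).
Qed.

Lemma succ_uniq (u v : state D) i j : succ_at i u v -> succ_at j u v -> j = i.
Proof.
move=> /andP [/andP [ui nvi] /forallP eqv] /andP [/andP [uj nvj] _].
apply/eqP; apply/negPn/negP => nji.
by have := eqv j; rewrite nji /= uj (negbTE nvj).
Qed.

Definition cmg (s : state D) (us : seq (state D)) :=
  count (fun p : state D * state D => [exists i, succ_at i p.1 p.2 && merging p.1 i])
        (zip (s :: us) us).

Lemma chain_gen (s : state D) us :
  path (fun a b => [exists i, succ_at i a b]) s us ->
  size_state (last s us) + KK (cs (last s us)) + (cmg s us).*2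
  = size_state s + KK (cs s).
Proof.
elim: us s => [|w us IH] s /=; first by rewrite addn0.
case/andP => /existsP [i si] pu.
have := IH w pu; rewrite /cmg /= -/(cmg w us).
have -> : [exists j, succ_at j s w && merging s j] = merging s i.
  apply/existsP/idP => [[j /andP [sj mj]]|mi]; last by exists i; rewrite si.
  by rewrite -(succ_uniq si sj).
have K := key_step si; have S := size_succ si.
move: K S; move: (nat_of_bool (merging s i)) (size_state (last w us)) (KK (cs (last w us)))
  (cmg w us) (size_state w) (KK (cs w)) (size_state s) (KK (cs s)).
move=> m a b c d e f g K S I; clear -K S I; lia.
Qed.

Lemma size_vec1 : size_state (vec1 D) = n.
Proof.
rewrite /size_state (_ : [set j | vec1 D j] = setT) ?cardsT ?card_ord //.
by apply/setP => j; rewrite !inE ffunE.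
Qed.

Lemma size_lt (u : state D) j : ~~ u j -> size_state u < n.
Proof.
move=> nuj; rewrite /size_state -[X in _ < X]card_ord.
apply: proper_card; apply/properP; split; first exact: subset_predT.
by exists j => //; rewrite inE.
Qed.

Lemma bound (u : state D) : size_state u + KK (cs u) <= n + KK (cs (vec1 D)).
Proof.
move: {2}(n - size_state u) (leqnn (n - size_state u)) => k.
elim: k u => [|k IH] u hk.
  case: (pickP (fun j => ~~ u j)) => [j nuj|all].
    by have := size_lt nuj; move: hk; clear; lia.
  have -> : u = vec1 D; last by rewrite size_vec1.
  by apply/ffunP => j; rewrite ffunE; move/negbT: (all j); rewrite negbK.
case: (pickP (fun j => ~~ u j)) => [j nuj|all]; last first.
  have -> : u = vec1 D; last by rewrite size_vec1.
  by apply/ffunP => j; rewrite ffunE; move/negbT: (all j); rewrite negbK.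
set u' : state D := [ffun l => if l == j then true else u l].
have su : succ_at j u' u.
  rewrite /succ_at ffunE eqxx nuj /=; apply/forallP => l; rewrite ffunE.
  by case: (eqVneq l j) => //= ->; rewrite eqxx.
have S := size_succ su; have K := key_step su.
have lt := size_lt nuj.
have := IH u'; move: hk K S lt.
move: (size_state u) (size_state u') (KK (cs u)) (KK (cs u')) (nat_of_bool (merging u' j))
  (KK (cs (vec1 D))).
move=> a b c d m e hk K S lt I; clear -hk K S lt I; lia.
Qed.

Definition Mq : int := qgr (u := vec1 D) [ffun => true].

Lemma Mq_val : Mq = (Posz (npos D) - 2%:Z * Posz (nneg D) + Posz (n + KK (cs (vec1 D)))
   + Posz (nfree D))%R.
Proof.
rewrite /Mq /qgr size_vec1.
have zp : Zplus (u := vec1 D) [ffun => true] = #|circ (vec1 D)|.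
  by apply: eq_card => c; rewrite !inE ffunE.
have zm : Zminus (u := vec1 D) [ffun => true] = 0.
  by apply: eq_card0 => c; rewrite !inE ffunE.
rewrite zp zm card_circ.
move: (npos D) (nneg D) (KK (cs (vec1 D))) (nfree D) => a b c d; clear; lia.
Qed.

Lemma q_le (u : state D) (x : enhancement u) : (qgr x <= Mq)%R.
Proof.
rewrite Mq_val /qgr.
have Z := Zpm x; rewrite card_circ in Z.
have B := bound u.
move: Z B; move: (npos D) (nneg D) (KK (cs (vec1 D))) (nfree D) (size_state u) (Zplus x)
  (Zminus x) (KK (cs u)).
move=> a b c d e f g h Z B; clear -Z B; lia.
Qed.

Lemma jmax_val : jmax D = Mq.
Proof.
rewrite /jmax.
apply/eqP; rewrite eq_le; apply/andP; split.
  apply: (big_ind (fun y => y <= Mq)%R).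
  - exact: le_refl.
  - by move=> a b ha hb; rewrite ge_max ha hb.
  - by move=> [w y] _; exact: q_le.
apply: (big_rec (fun y => Mq <= y)%R); first exact: le_refl.
by move=> s y _ IH; rewrite le_max IH orbT.
Qed.

End Final.

Unset Implicit Arguments.
Set Strict Implicit.

Theorem proposition4p4 (D : link_diagram) (u : state D) (x : enhancement u)
    (j : int) (us : seq (state D)) :
  qgr x = j -> is_chain us u ->
  ((Zminus x)%:Z = ((jmax D - j) %/ 2)%Z - (chain_mergings us)%:Z)%R.
Proof.
move=> <- /andP [pth /eqP lu].
have C := chain_gen pth; rewrite lu size_vec1 in C.
have cm : chain_mergings us = cmg (vec1 D) us by [].
have Z := Zpm x; rewrite card_circ in Z.
rewrite cm jmax_val Mq_val /qgr.
have -> : (Posz (npos D) - 2%:Z * Posz (nneg D) + Posz (ncross D + KK (cs (vec1 D)))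
   + Posz (nfree D) - ((npos D)%:Z - 2%:Z * (nneg D)%:Z + (size_state u)%:Z
   + (Zplus x)%:Z - (Zminus x)%:Z))%R = ((Posz (cmg (vec1 D) us + Zminus x)) * 2%:Z)%R.
  move: C Z; move: (npos D) (nneg D) (KK (cs (vec1 D))) (nfree D) (size_state u) (Zplus x)
    (Zminus x) (KK (cs u)) (cmg (vec1 D) us) (ncross D).
  move=> a b c d e f g h m nn C Z; clear -C Z; lia.
rewrite mulzK //.
move: (cmg (vec1 D) us) (Zminus x) => a b; clear; lia.
Qed.
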